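(* Let $n\geq2$ and $1\le k\le n$. Let $\mathcal M_n^{k,k-1}$ (resp. $\mathcal M_n^{k,k+1}$) be the set of monotone permutations $\pi\in S_n$ with $\pi(1)=k$ and $\pi(2)=k-1$ (resp. $\pi(2)=k+1$). For $\pi\in\mathcal M_n^{k,k-1}$ (resp. $\pi\in\mathcal M_n^{k,k+1}$) define $\bar\pi\in S_{n-1}$ by $\bar\pi(1)=k-1$ (resp. $\bar\pi(1)=k$) and, for $i=2,\dots,n-1$, $\bar\pi(i)=\pi(i+1)$ if $\pi(i+1)<k$ and $\bar\pi(i)=\pi(i+1)-1$ if $\pi(i+1)>k$. Then $\pi\mapsto\bar\pi$ is a bijection $\mathcal M_n^{k,k-1}\to\mathcal M_{n-1}^{k-1}$ (resp. $\mathcal M_n^{k,k+1}\to\mathcal M_{n-1}^{k}$), and $(-1)^{\operatorname{dr}(\bar\pi)}=(-1)^{\operatorname{dr}(\pi)+k}$ (resp. $(-1)^{\operatorname{dr}(\bar\pi)}=(-1)^{\operatorname{dr}(\pi)+k-1}$).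
   Context: A permutation $\pi\in S_n$ is monotone if, for each $i=1,\dots,n$, either $\pi(j)<\pi(i)$ for all $j<i$, or $\pi(j)>\pi(i)$ for all $j<i$; in the second case $i$ is called a drop of $\pi$ (by convention $i=1$ satisfies the first condition vacuously and is not a drop). $\mathcal M_n^k$ denotes the set of monotone permutations with $\pi(1)=k$, and $\operatorname{dr}(\pi)$ the sum of all drops of $\pi$. *)

(* Defs.v *)
(* Permutations of {1..n} are represented by 'S_n = {perm 'I_n}
   (values 0..n-1); [pv p i] is the 1-based reading pi(i) in {1..n}. *)
From mathcomp Require Import all_boot all_order all_algebra all_fingroup.
Set Implicit Arguments. Unset Strict Implicit. Unset Printing Implicit Defensive.

(* 1-based value pi(i) for 1 <= i <= n (returns 0 outside that range). *)
Definition pv {n : nat} (p : 'S_n) (i : nat) : nat :=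
  match @insub nat (fun m => m < n) _ i.-1 with
  | Some j => (p j).+1
  | None => 0
  end.

Definition monotone {n : nat} (p : 'S_n) : bool :=
  [forall i in 'I_n.+1,
     (0 < i) ==>
     ([forall j in 'I_n.+1, ((0 < j) && (j < i)) ==> (pv p j < pv p i)]
      || [forall j in 'I_n.+1, ((0 < j) && (j < i)) ==> (pv p i < pv p j)])].

Definition is_drop {n : nat} (p : 'S_n) (i : nat) : bool :=
  (1 < i) && (i <= n) &&
  [forall j in 'I_n.+1, ((0 < j) && (j < i)) ==> (pv p i < pv p j)].

Definition dr {n : nat} (p : 'S_n) : nat :=
  \sum_(1 <= i < n.+1 | is_drop p i) i.

Definition Mset (n k : nat) : {set 'S_n} :=
  [set p : 'S_n | monotone p && (pv p 1 == k)].

Definition M2set (n k l : nat) : {set 'S_n} :=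
  [set p : 'S_n | monotone p && (pv p 1 == k) && (pv p 2 == l)].

Definition barval {n : nat} (k v : nat) (p : 'S_n) (i : nat) : nat :=
  if i == 1 then v
  else if pv p i.+1 < k then pv p i.+1 else (pv p i.+1).-1.

(* Main.v *)
Require Import Defs.
From mathcomp Require Import all_boot all_order all_algebra all_fingroup.
From mathcomp Require Import zify.
Set Implicit Arguments. Unset Strict Implicit. Unset Printing Implicit Defensive.

Lemma pvE n (p : 'S_n) (j : 'I_n) : pv p j.+1 = (p j).+1.
Proof.
rewrite /pv /= (insubT (fun m => m < n) (ltn_ord j)) /=.
by congr (p _).+1; apply: val_inj.
Qed.

Lemma forall_rangeP n i (P : nat -> bool) : i <= n.+1 ->
  reflect (forall j, 0 < j < i -> P j)
    [forall j in 'I_n.+1, ((0 < j) && (j < i)) ==> P j].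
Proof.
move=> hi; apply: (iffP forallP) => H j.
- move=> /andP[h0 hj].
  have := H (Ordinal (leq_trans hj hi)); by rewrite /= h0 hj.
- by apply/implyP => _; apply/implyP => h; apply: H.
Qed.

Lemma monotoneP n (p : 'S_n) : reflect
  (forall i, 0 < i <= n -> (forall j, 0 < j < i -> pv p j < pv p i)
       \/ (forall j, 0 < j < i -> pv p i < pv p j)) (monotone p).
Proof.
apply: (iffP forallP) => H i.
- move=> /andP[h0 hi].
  have := H (Ordinal (hi : i < n.+1)); rewrite /= h0 /=.
  case/orP => [/(@forall_rangeP n i (fun j => pv p j < pv p i) (leqW hi))|
    /(@forall_rangeP n i (fun j => pv p i < pv p j) (leqW hi))] h; by [left|right].
- apply/implyP => _; apply/implyP => h0.
  have hi : i <= n by rewrite -ltnS.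
  case: (H i); first by rewrite h0.
  + by move=> h; apply/orP; left; apply/(@forall_rangeP n i (fun j => pv p j < pv p i) (leqW hi)).
  + by move=> h; apply/orP; right; apply/(@forall_rangeP n i (fun j => pv p i < pv p j) (leqW hi)).
Qed.

Lemma is_dropP n (p : 'S_n) i : reflect
  ((1 < i <= n) /\ forall j, 0 < j < i -> pv p i < pv p j) (is_drop p i).
Proof.
rewrite /is_drop; apply: (iffP idP).
- move=> /andP[/andP[h1 h2] /(@forall_rangeP n i (fun j => pv p i < pv p j) (leqW h2)) h].
  by rewrite h1 h2.
- move=> [/andP[h1 h2] h]; rewrite h1 h2 /=.
  by apply/(@forall_rangeP n i (fun j => pv p i < pv p j) (leqW h2)).
Qed.

Definition fbar_fun m (p : 'S_m.+2) (j : 'I_m.+1) : 'I_m.+1 :=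
  odflt j (unlift (p ord0) (p (lift ord0 j))).

Lemma fbar_funE m (p : 'S_m.+2) j : p (lift ord0 j) = lift (p ord0) (fbar_fun p j).
Proof.
rewrite /fbar_fun; case: unliftP => [u|] E //=.
by move/perm_inj: E => /eqP; rewrite eq_sym (negbTE (neq_lift _ _)).
Qed.

Lemma fbar_fun_inj m (p : 'S_m.+2) : injective (fbar_fun p).
Proof.
move=> j1 j2 E; apply: (@lift_inj _ ord0); apply: (@perm_inj _ p).
by rewrite !fbar_funE E.
Qed.

Definition fbar m (p : 'S_m.+2) : 'S_m.+1 := perm (@fbar_fun_inj m p).

Lemma fbarE m (p : 'S_m.+2) j : p (lift ord0 j) = lift (p ord0) (fbar p j).
Proof. by rewrite permE fbar_funE. Qed.

Lemma fbar_lift m (a : 'I_m.+2) (q : 'S_m.+1) : fbar (lift_perm ord0 a q) = q.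
Proof.
apply/permP => j; apply: (@lift_inj _ a).
by have := fbarE (lift_perm ord0 a q) j; rewrite lift_perm_lift lift_perm_id.
Qed.

Lemma fbar_eq m (p1 p2 : 'S_m.+2) : p1 ord0 = p2 ord0 -> fbar p1 = fbar p2 -> p1 = p2.
Proof.
move=> E0 E; apply/permP => i; case: (unliftP ord0 i) => [j|] ->; last by [].
by rewrite !fbarE E0 E.
Qed.

Lemma pv1 n (p : 'S_n.+1) : pv p 1 = (p ord0).+1.
Proof. exact: (pvE p ord0). Qed.

Lemma fbar_rel m (p : 'S_m.+2) i : 0 < i < m.+2 ->
  pv p i.+1 = bump (pv p 1) (pv (fbar p) i).
Proof.
case: i => // i /andP[_ hi]; rewrite ltnS in hi.
have := pvE p (lift ord0 (Ordinal hi)); rewrite lift0 /= => ->.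
rewrite fbarE pv1 (pvE (fbar p) (Ordinal hi)) /=.
by rewrite bumpS.
Qed.

Lemma bumpE k x : bump k x = if k <= x then x.+1 else x.
Proof. by rewrite /bump; case: leqP => h; rewrite ?add1n ?add0n. Qed.

Section Ext.
Variables (P Q : nat -> nat) (k N : nat).
Hypothesis Hrel : forall i, 0 < i < N -> P i.+1 = bump k (Q i).
Hypothesis HP1 : P 1 = k.
Hypothesis HQ1 : (Q 1 = k.-1 /\ 0 < k) \/ Q 1 = k.

Lemma ext_min i : 1 < i < N ->
  (forall j, 0 < j < i.+1 -> P i.+1 < P j) <-> (forall j, 0 < j < i -> Q i < Q j).
Proof.
move=> hi; have Ei : P i.+1 = bump k (Q i) by apply: Hrel; lia.
split => H j hj.
- have Ej : P j.+1 = bump k (Q j) by apply: Hrel; lia.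
  have := H j.+1 ltac:(lia); rewrite Ei Ej !bumpE.
  by do 2 case: ifP => ?; lia.
- case: j hj => [|[|j]] hj; first lia.
  + have := H 1 ltac:(lia); rewrite HP1 Ei.
    by case: HQ1 => [[-> ?]|->]; rewrite bumpE; case: ifP => ?; lia.
  + have Ej : P j.+2 = bump k (Q j.+1) by apply: Hrel; lia.
    have := H j.+1 ltac:(lia); rewrite Ei Ej !bumpE.
    by do 2 case: ifP => ?; lia.
Qed.

Lemma ext_max i : 1 < i < N ->
  (forall j, 0 < j < i.+1 -> P j < P i.+1) <-> (forall j, 0 < j < i -> Q j < Q i).
Proof.
move=> hi; have Ei : P i.+1 = bump k (Q i) by apply: Hrel; lia.
split => H j hj.
- have Ej : P j.+1 = bump k (Q j) by apply: Hrel; lia.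
  have := H j.+1 ltac:(lia); rewrite Ei Ej !bumpE.
  by do 2 case: ifP => ?; lia.
- case: j hj => [|[|j]] hj; first lia.
  + have := H 1 ltac:(lia); rewrite HP1 Ei.
    by case: HQ1 => [[-> ?]|->]; rewrite bumpE; case: ifP => ?; lia.
  + have Ej : P j.+2 = bump k (Q j.+1) by apply: Hrel; lia.
    have := H j.+1 ltac:(lia); rewrite Ei Ej !bumpE.
    by do 2 case: ifP => ?; lia.
Qed.
End Ext.

Section Transfer.
Variables (m : nat) (p : 'S_m.+2).
Hypothesis HQ1 : (pv (fbar p) 1 = (pv p 1).-1 /\ 0 < pv p 1) \/ pv (fbar p) 1 = pv p 1.

Lemma mono_transfer : monotone p = monotone (fbar p).
Proof.
have EM := ext_max (@fbar_rel m p) (erefl _) HQ1.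
have Em := ext_min (@fbar_rel m p) (erefl _) HQ1.
apply/monotoneP/monotoneP => H i hi.
- case: i hi => [|[|i]] hi; first lia.
    by left => j; lia.
  have := H i.+3 ltac:(lia); case=> h; [left|right].
  + by apply: (proj1 (EM i.+2 ltac:(lia))).
  + by apply: (proj1 (Em i.+2 ltac:(lia))).
- case: i hi => [|[|[|i]]] hi; first lia.
  + by left => j; lia.
  + have R := @fbar_rel m p 1 ltac:(lia).
    case: (ltngtP (pv p 1) (pv p 2)) => h; [left|right|].
    * by move=> j hj; have -> : j = 1 by lia.
    * by move=> j hj; have -> : j = 1 by lia.
    * by move: R; rewrite -h bumpE; case: ifP => ?; lia.
  + have := H i.+2 ltac:(lia); case=> h; [left|right].
    * by apply: (proj2 (EM i.+2 ltac:(lia))).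
    * by apply: (proj2 (Em i.+2 ltac:(lia))).
Qed.

Lemma drop_transfer i : 1 < i < m.+2 -> is_drop p i.+1 = is_drop (fbar p) i.
Proof.
move=> hi; have Em := ext_min (@fbar_rel m p) (erefl _) HQ1 hi.
apply/is_dropP/is_dropP => [[hr h]|[hr h]]; (split; first lia).
- exact: (proj1 Em h).
- exact: (proj2 Em h).
Qed.
End Transfer.

Lemma sum_lt n b : \sum_(i < n) (i < b) = minn n b.
Proof.
elim: n => [|n IH]; first by rewrite big_ord0 min0n.
rewrite big_ord_recr /= IH; case: ltnP => h /=; lia.
Qed.

Lemma drops_count M (q : 'S_M.+1) : monotone q ->
  \sum_(1 <= i < M.+2) is_drop q i = (pv q 1).-1.
Proof.
move/monotoneP => H.
rewrite (eq_big_nat _ _ (F2 := fun i => nat_of_bool (pv q i < pv q 1))); last first.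
  move=> i /andP[h1 h2]; congr nat_of_bool.
  case: i h1 h2 => [|[|i]] // _ h2; first by rewrite /is_drop !ltnn.
  apply/is_dropP/idP => [[_ h]|h]; first by apply: h; lia.
  split; first lia.
  case: (H i.+2 ltac:(lia)) => h' //.
  by have := h' 1 ltac:(lia); lia.
rewrite big_add1 /= big_mkord.
rewrite (eq_bigr (fun i : 'I_M.+1 => nat_of_bool (q i < q ord0))); last first.
  by move=> i _; rewrite pvE pv1 ltnS.
symmetry; rewrite pv1 /=.
transitivity (\sum_(i < M.+1) nat_of_bool (i < q ord0)).
  by rewrite sum_lt; have := ltn_ord (q ord0); lia.
by rewrite (reindex_inj (@perm_inj _ q)).
Qed.

Lemma dr_rel m (p : 'S_m.+2) (q : 'S_m.+1)
  (Hd : forall i, 1 < i < m.+2 -> is_drop p i.+1 = is_drop q i) :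
  dr p = 2 * is_drop p 2 + dr q + \sum_(1 <= i < m.+2) is_drop q i.
Proof.
have E1 : forall n (r : 'S_n), is_drop r 1 = false by move=> n r; rewrite /is_drop ltnn.
rewrite /dr !big_mkcond /=.
rewrite [LHS]big_ltn // [LHS]big_ltn // [\sum_(3 <= i < m.+3) _]big_add1 /=.
rewrite [\sum_(1 <= i < m.+2 | is_drop q i) i]big_mkcond /= [\sum_(1 <= i < m.+2) (if _ then _ else _)]big_ltn // [\sum_(1 <= i < m.+2) nat_of_bool _]big_ltn // ?E1 /=.
rewrite (eq_big_nat _ _ (F2 := fun i => (if is_drop q i then i else 0) + nat_of_bool (is_drop q i))); last first.
  by move=> i hi; rewrite Hd //; case: is_drop => /=; lia.
rewrite big_split /=.
case: (is_drop p 2) => /=; lia.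
Qed.
Import GRing.Theory.

Lemma gen m k l v e (hk1 : 1 <= k) (hkn : k <= m.+2)
 (Hc : (l = k.-1 /\ v = k.-1 /\ e = k) \/ (l = k.+1 /\ v = k /\ e = k.-1)) :
 exists f : 'S_m.+2 -> 'S_m.+1,
   (forall p, p \in M2set m.+2 k l -> forall i, 1 <= i <= m.+1 -> pv (f p) i = barval k v p i)
   /\ {in M2set m.+2 k l &, injective f}
   /\ f @: M2set m.+2 k l = Mset m.+1 v
   /\ (forall p, p \in M2set m.+2 k l -> ((-1) ^+ dr (f p) : int)%R = ((-1) ^+ (dr p + e))%R).
Proof.
exists (@fbar m).
have Q1 : forall p, p \in M2set m.+2 k l -> pv (fbar p) 1 = v.
  move=> p; rewrite inE => /andP[/andP[_ /eqP h1] /eqP h2].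
  have := @fbar_rel m p 1 ltac:(lia); rewrite h1 h2 bumpE.
  by case: ifP; case: Hc => [[-> [-> _]]|[-> [-> _]]]; lia.
have HQ : forall p, p \in M2set m.+2 k l ->
    (pv (fbar p) 1 = (pv p 1).-1 /\ 0 < pv p 1) \/ pv (fbar p) 1 = pv p 1.
  move=> p hp; rewrite Q1 //; move: hp; rewrite inE => /andP[/andP[_ /eqP ->] _].
  by case: Hc => [[_ [-> _]]|[_ [-> _]]]; [left|right].
have P1 : forall p, p \in M2set m.+2 k l -> pv p 1 = k.
  by move=> p; rewrite inE => /andP[/andP[_ /eqP ->] _].
have P2 : forall p, p \in M2set m.+2 k l -> pv p 2 = l.
  by move=> p; rewrite inE => /andP[_ /eqP ->].
have Qpos : forall q : 'S_m.+1, 0 < pv q 1 by move=> q; rewrite pv1.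
split.
  move=> p hp i hi; rewrite /barval; case: eqP => [->|ne]; first exact: Q1.
  rewrite (@fbar_rel m p i ltac:(lia)) P1 // bumpE.
  by case: (leqP k (pv (fbar p) i)) => h /=; case: ifP => h'; lia.
split.
  move=> p1 p2 h1 h2 E; apply: fbar_eq E; apply: ord_inj.
  by have := P1 _ h1; have := P1 _ h2; rewrite !pv1; lia.
split.
  apply/setP => q; apply/imsetP/idP.
  - case=> p hp ->; rewrite inE -(mono_transfer (HQ p hp)) Q1 // eqxx andbT.
    by move: hp; rewrite inE => /andP[/andP[-> _] _].
  - rewrite inE => /andP[hm /eqP hv].
    have ha : k.-1 < m.+2 by lia.
    pose p := lift_perm ord0 (Ordinal ha) q.
    have fp : fbar p = q by apply: fbar_lift.
    have p1 : pv p 1 = k by rewrite pv1 lift_perm_id /=; lia.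
    have p2 : pv p 2 = l.
      have := @fbar_rel m p 1 ltac:(lia); rewrite fp hv p1 bumpE => ->.
      by case: Hc => [[-> [-> _]]|[-> [-> _]]]; case: ifP; lia.
    have hQ : (pv (fbar p) 1 = (pv p 1).-1 /\ 0 < pv p 1) \/ pv (fbar p) 1 = pv p 1.
      by rewrite fp hv p1; case: Hc => [[_ [-> _]]|[_ [-> _]]]; [left|right].
    exists p; last by rewrite fp.
    by rewrite inE (mono_transfer hQ) fp hm p1 p2 !eqxx.
move=> p hp.
have hd := drop_transfer (HQ p hp).
have hm : monotone (fbar p).
  by rewrite -(mono_transfer (HQ p hp)); move: hp; rewrite inE => /andP[/andP[-> _] _].
rewrite (dr_rel hd) (drops_count hm) Q1 //.
have hq := Qpos (fbar p); rewrite Q1 // in hq.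
have [c Ec] : exists c, 2 * is_drop p 2 + dr (fbar p) + v.-1 + e = dr (fbar p) + 2 * c.
  case: Hc => [[El [Ev Ee]]|[El [Ev Ee]]].
  - have -> : is_drop p 2 = true.
      apply/is_dropP; split; first lia.
      move=> j hj; have -> : j = 1 by lia.
      by rewrite P1 // P2 // El; lia.
    by exists k; lia.
  - have -> : is_drop p 2 = false.
      apply/negbTE/negP => /is_dropP [_ h]; have := h 1 isT.
      by rewrite P1 // P2 // El; lia.
    by exists k.-1; lia.
by rewrite Ec exprD exprM sqrrN !expr1n mulr1.
Qed.
Theorem lemma2p6 (n k : nat) (hn : 2 <= n) (hk1 : 1 <= k) (hkn : k <= n) :
  (* case pi(2) = k - 1 *)
  (exists f : 'S_n -> 'S_n.-1,
     (forall p, p \in M2set n k k.-1 ->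
        forall i, 1 <= i <= n.-1 -> pv (f p) i = barval k k.-1 p i)
     /\ {in M2set n k k.-1 &, injective f}
     /\ f @: M2set n k k.-1 = Mset n.-1 k.-1
     /\ (forall p, p \in M2set n k k.-1 ->
          ((-1) ^+ dr (f p) : int)%R = ((-1) ^+ (dr p + k))%R))
  /\
  (* case pi(2) = k + 1 *)
  (exists f : 'S_n -> 'S_n.-1,
     (forall p, p \in M2set n k k.+1 ->
        forall i, 1 <= i <= n.-1 -> pv (f p) i = barval k k p i)
     /\ {in M2set n k k.+1 &, injective f}
     /\ f @: M2set n k k.+1 = Mset n.-1 k
     /\ (forall p, p \in M2set n k k.+1 ->
          ((-1) ^+ dr (f p) : int)%R = ((-1) ^+ (dr p + k.-1))%R)).
Proof.
case: n hn hkn => [|[|m]] // _ hkn.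
split.
- apply: gen => //; by left.
- apply: gen => //; by right.
Qed.
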